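(* Let $n \ge 1$, $p\in[0,1]$, $t \ge 0$, and $\gamma:\mathbb{N}^*\to[0,1]$ non-increasing. Let $p_i := \gamma(i)p$ for $i\ge1$ and $q_n := \prod_{i=1}^n (1-p_i)$. Then \[ \text{(a)}\quad q_n e^{t p_n (1-q_n)} + (1-q_n)e^{-t p_n q_n} \le \exp\left(\frac{p_n t^2}{4n}\right), \] \[ \text{(b)}\quad q_n e^{t p_n (q_n-1)} + (1-q_n)e^{t p_n q_n} \le \exp\left(\frac{p_n t^2}{4n}\right). \] *)

(* Defs.v *)
From Stdlib Require Import Reals.
Open Scope R_scope.

Fixpoint prod_1_to (f : nat -> R) (n : nat) : R :=
  match n with
  | O => 1
  | S m => prod_1_to f m * f (S m)
  end.

Definition p_seq (gamma : nat -> R) (p : R) (i : nat) : R := gamma i * p.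

Definition q_seq (gamma : nat -> R) (p : R) (n : nat) : R :=
  prod_1_to (fun i => 1 - p_seq gamma p i) n.

(* Main.v *)
Require Import Defs.
From Stdlib Require Import Reals.
From Coquelicot Require Import Coquelicot.
From Stdlib Require Import Reals Lra Psatz.
Open Scope R_scope.

Lemma ln_le_xm1 x : 0 < x -> ln x <= x - 1.
Proof. intros H. pose proof (exp_ineq1_le (ln x)). rewrite exp_ln in H0; lra. Qed.

Lemma ln_ge_1m x : 0 < x -> 1 - / x <= ln x.
Proof. intros H. pose proof (ln_le_xm1 (/ x) (Rinv_0_lt_compat _ H)).
  rewrite ln_Rinv in H0; lra. Qed.

Lemma ln_half y : 0 < y -> ln y <= y / 2.
Proof. intros H. pose proof (sqrt_lt_R0 y H) as Hs.
  assert (E : ln y = 2 * ln (sqrt y)).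
  { rewrite <- (sqrt_sqrt y) at 1 by lra. rewrite ln_mult by lra. ring. }
  pose proof (ln_le_xm1 _ Hs). pose proof (sqrt_sqrt y (Rlt_le _ _ H)).
  set (s := sqrt y) in *. rewrite E, <- H1.
  pose proof (pow2_ge_0 (s - 2)). nra. Qed.

Lemma exp_quad x : 0 <= x -> 1 + x + x^2/2 <= exp x.
Proof.
  intros Hx. destruct (Req_dec x 0) as [->|Hx0].
  { rewrite exp_0. lra. }
  assert (Hx' : 0 < x) by (destruct Hx; [lra| congruence]).
  assert (Hd : forall c, 0 <= c <= x -> derivable_pt_lim (fun y => exp y - 1 - y - y^2/2) c (exp c - 1 - c)).
  { intros c _. apply is_derive_Reals. auto_derive; try field; auto. }
  destruct (MVT_cor2 _ _ 0 x Hx' Hd) as [c [Hc1 Hc2]].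
  simpl in Hc1. rewrite exp_0 in Hc1. pose proof (exp_ineq1_le c). nra.
Qed.

Lemma poly_exp L : 0 <= L -> L * (2 * L - 1) <= exp L.
Proof.
  intros HL.
  assert (E : exp L = (exp (L/4) * exp (L/4)) * (exp (L/4) * exp (L/4))).
  { rewrite <- !exp_plus. f_equal. field. }
  pose proof (exp_quad (L/4) ltac:(lra)).
  set (e := exp (L/4)) in *. set (y := 1 + L/4 + (L/4)^2/2) in *.
  assert (Hy : 0 <= y) by (unfold y; nra).
  assert (Hyy : y*y <= e*e) by (apply Rmult_le_compat; lra).
  assert ((y*y)*(y*y) <= (e*e)*(e*e)).
  { apply Rmult_le_compat; try lra; nra. }
  rewrite E. apply Rle_trans with ((y*y)*(y*y)); [|lra]. unfold y.
  pose proof (pow2_ge_0 (L - 3)). pose proof (pow2_ge_0 (L*L - 6)).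
  pose proof (Rmult_le_pos _ _ HL (pow2_ge_0 (L-3))).
  nra.
Qed.

Definition ff (r u : R) := r*ln r - r*ln u + (1-r)*ln(1-r) - (1-r)*ln(1-u) + (r-u)^2 * ln u.
Definition BB (r u : R) := 1/(u*(1-u)) + 1 - r/u + 2*ln u.

Lemma ff_deriv r u : 0 < u < 1 -> derivable_pt_lim (ff r) u ((u - r) * BB r u).
Proof.
  intros Hu. apply is_derive_Reals. unfold ff, BB.
  auto_derive.
  - repeat split; lra.
  - field. lra.
Qed.

Lemma ff_r r : ff r r = 0.
Proof. unfold ff. replace (r - r) with 0 by ring. ring. Qed.

Lemma inv_u_le u : 0 < u < 1 -> / u <= 1/(u*(1-u)).
Proof.
  intros Hu. unfold Rdiv. rewrite Rmult_1_l, Rinv_mult.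
  assert (1 <= / (1-u)).
  { rewrite <- Rinv_1. apply Rinv_le_contravar; lra. }
  pose proof (Rinv_0_lt_compat u ltac:(lra)). nra.
Qed.

Lemma B_pos_right r u : 0 < r -> r <= u < 1 -> 0 <= BB r u.
Proof.
  intros Hr Hu. unfold BB.
  assert (Hu0 : 0 < u) by lra.
  pose proof (inv_u_le u ltac:(lra)).
  pose proof (ln_half (/u) (Rinv_0_lt_compat u Hu0)). rewrite ln_Rinv in H0 by lra.
  assert (r / u <= 1).
  { unfold Rdiv. apply Rle_trans with (u * / u). apply Rmult_le_compat_r; [left; apply Rinv_0_lt_compat|]; lra.
    rewrite Rinv_r; lra. }
  lra.
Qed.

Lemma B_pos_small r u : 0 < r < 1 -> 0 < u -> u <= ((1-r)/4)^2 -> 0 < BB r u.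
Proof.
  intros Hr Hu Hle. unfold BB.
  pose proof (sqrt_lt_R0 u Hu) as Hv.
  pose proof (sqrt_sqrt u (Rlt_le _ _ Hu)) as Hvv.
  set (v := sqrt u) in *.
  assert (Hvle : v <= (1-r)/4).
  { unfold v. rewrite <- (sqrt_pow2 ((1-r)/4)) by lra. apply sqrt_le_1; lra. }
  assert (Hu1 : u < 1) by nra.
  pose proof (inv_u_le u ltac:(lra)).
  assert (Eln : ln u = 2 * ln v).
  { rewrite <- Hvv. rewrite ln_mult by lra. ring. }
  pose proof (ln_ge_1m v Hv).
  set (w := / v).
  assert (Hw : /u = w * w).
  { unfold w. rewrite <- Hvv. rewrite Rinv_mult. reflexivity. }
  assert (Hwv : w * v = 1) by (unfold w; field; lra).
  assert (Hw4 : 4 <= (1-r) * w).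
  { assert (4 * v <= 1 - r) by lra.
    assert (0 < w) by (unfold w; apply Rinv_0_lt_compat; lra). nra. }
  assert (Hru : r / u = r * (w*w)) by (unfold Rdiv; rewrite Hw; ring).
  assert (Hw0 : 0 < w) by (unfold w; apply Rinv_0_lt_compat; lra).
  assert (H3 : w * ((1-r)*w - 4) >= 0) by nra.
  rewrite Hru, Eln. rewrite Hw in H. fold w in H0.
  assert (w * ((1-r)*w - 4) = w*w - r*(w*w) - 4*w) by ring. lra.
Qed.

Lemma decrease_contra f a b l : derivable_pt_lim f a l -> l < 0 -> a < b ->
  exists x, a < x < b /\ f x < f a.
Proof.
  intros Hd Hl Hab.
  destruct (Hd (- l / 2) ltac:(lra)) as [delta Hdelta].
  set (h := Rmin (delta/2) ((b-a)/2)).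
  assert (Hh0 : 0 < h).
  { unfold h. apply Rmin_glb_lt; pose proof (cond_pos delta); lra. }
  assert (Hh1 : h <= delta/2) by apply Rmin_l.
  assert (Hh2 : h <= (b-a)/2) by apply Rmin_r.
  pose proof (cond_pos delta).
  specialize (Hdelta h ltac:(lra)).
  assert (Rabs h < delta) by (rewrite Rabs_right; lra).
  specialize (Hdelta H0).
  apply Rabs_def2 in Hdelta. destruct Hdelta as [H1 H2].
  exists (a + h). split; [lra|].
  assert ((f (a + h) - f a) / h < 0) by lra.
  assert (f (a+h) - f a = ((f (a + h) - f a) / h) * h) by (field; lra).
  nra.
Qed.

Lemma crit r c : 0 < c -> c < r -> r < 1 -> BB r c = 0 -> 0 <= ff r c.
Proof.
  intros Hc Hcr Hr HB.
  assert (Hlc : ln c < 0) by (rewrite <- ln_1; apply ln_increasing; lra).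
  set (L := - ln c).
  assert (HL : 0 < L) by (unfold L; lra).
  set (k := (1 - r) / c).
  assert (Hk0 : 0 < k) by (unfold k; apply Rdiv_lt_0_compat; lra).
  assert (Hck : 1 - r = c * k) by (unfold k; field; lra).
  assert (Hk : k = 2 * L - 1 - 1/(1-c)).
  { unfold BB in HB. assert (k = 1/c - r/c) by (unfold k; field; lra).
    assert (1/c - 1/(c*(1-c)) = -1/(1-c)) by (field; lra).
    unfold L. lra. }
  assert (Hinv : 1 <= 1/(1-c)).
  { unfold Rdiv. rewrite Rmult_1_l. rewrite <- Rinv_1. apply Rinv_le_contravar; lra. }
  assert (Hlr : ln (1 - r) = ln c + ln k) by (rewrite Hck; apply ln_mult; lra).
  assert (Hrlnr : r - 1 <= r * ln r).
  { pose proof (ln_ge_1m r ltac:(lra)).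
    assert (r * / r = 1) by (field; lra). nra. }
  assert (Hklnk : k - 1 <= k * ln k).
  { pose proof (ln_ge_1m k Hk0).
    assert (k * / k = 1) by (field; lra). nra. }
  assert (Hl1c : ln (1 - c) <= 0) by (pose proof (ln_le_xm1 (1-c) ltac:(lra)); lra).
  assert (Hpoly : L * (2 * L - 1) <= / c).
  { pose proof (poly_exp L ltac:(lra)). unfold L at 3 in H.
    rewrite exp_Ropp, exp_ln in H by lra. exact H. }
  assert (HLc : L * c * (2 * L - 1) <= 1).
  { assert (c * / c = 1) by (field; lra). nra. }
  assert (E : ff r c = r * ln r + L * r + c * k * (- L + ln k) - c * k * ln (1 - c) - L * (r - c)^2).
  { unfold ff. rewrite Hlr, Hck. unfold L. ring. }
  rewrite E.
  assert (Hk1 : 0 < k + 1 <= 2 * L - 1) by lra.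
  assert (HA : L * c * (k+1) <= 1).
  { apply Rle_trans with (L * c * (2*L - 1)); [|lra].
    apply Rmult_le_compat_l; [|lra]. nra. }
  assert (Hm : 0 <= - (c * k * ln (1 - c))).
  { assert (0 <= c * k) by nra. nra. }
  assert (Hb : c * k * ln k >= c * (k - 1)) by nra.
  assert (r = 1 - c * k) by lra.
  assert (Hfinal : 0 <= c * (2 * L - 1 - L * c * (k+1) * (k+1))).
  { apply Rmult_le_pos; [lra|]. nra. }
  assert (Eq : r * ln r + L * r + c * k * (- L + ln k) - c * k * ln (1 - c) - L * (r - c)^2
     >= c * (2 * L - 1 - L * c * (k+1) * (k+1))).
  { assert (Id : forall R0 lr lk l1, R0 = 1 - c * k ->
      R0 * lr + L * R0 + c * k * (- L + lk) - c * k * l1 - L * (R0 - c)^2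
      - c * (2 * L - 1 - L * c * (k+1) * (k+1))
      = (R0 * lr - (R0 - 1)) + (c * k * lk - c * (k - 1)) + (- (c * k * l1))).
    { intros R0 lr lk l1 HR. subst R0. ring. }
    specialize (Id r (ln r) (ln k) (ln (1 - c)) H). lra. }
  lra.
Qed.

Lemma ff_nonneg r q : 0 < r < 1 -> 0 < q < 1 -> 0 <= ff r q.
Proof.
  intros Hr Hq.
  destruct (Rle_or_lt r q) as [Hrq | Hqr].
  - destruct (Req_dec q r) as [->|Hne]. { rewrite ff_r; lra. }
    assert (Hlt : r < q) by lra.
    assert (Hd : forall c, r <= c <= q -> derivable_pt_lim (ff r) c ((fun u => (u - r) * BB r u) c)).
    { intros c Hc. apply ff_deriv. lra. }
    destruct (MVT_cor2 (ff r) (fun u => (u - r) * BB r u) r q Hlt Hd) as [c [Hc1 Hc2]].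
    rewrite ff_r in Hc1.
    pose proof (B_pos_right r c ltac:(lra) ltac:(lra)).
    assert (0 <= (c - r) * BB r c * (q - r)).
    { apply Rmult_le_pos; [apply Rmult_le_pos|]; lra. }
    lra.
  - set (m := ((1 - r)/4)^2).
    assert (Hm : 0 < m) by (unfold m; apply pow_lt; lra).
    set (a := Rmin q m).
    assert (Ha0 : 0 < a) by (unfold a; apply Rmin_glb_lt; lra).
    assert (Haq : a <= q) by apply Rmin_l.
    assert (Ham : a <= m) by apply Rmin_r.
    assert (HBa : 0 < BB r a) by (apply B_pos_small; auto; lra).
    assert (Hcont : forall c, a <= c <= r -> continuity_pt (ff r) c).
    { intros c Hc. apply derivable_continuous_pt.
      exists ((c - r) * BB r c). apply ff_deriv. lra. }
    destruct (continuity_ab_min (ff r) a r ltac:(lra) Hcont) as [mx [Hmin Hmx]].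
    assert (Hqm : ff r mx <= ff r q) by (apply Hmin; lra).
    enough (0 <= ff r mx) by lra.
    destruct (Req_dec mx r) as [->|Hne1]. { rewrite ff_r; lra. }
    destruct (Req_dec mx a) as [->|Hne2].
    + exfalso.
      assert (Hneg : (a - r) * BB r a < 0).
      { assert (0 < (r - a) * BB r a) by (apply Rmult_lt_0_compat; lra). nra. }
      destruct (decrease_contra (ff r) a r _ (ff_deriv r a ltac:(lra)) Hneg ltac:(lra))
        as [x [Hx1 Hx2]].
      specialize (Hmin x ltac:(lra)). lra.
    + assert (Hin : a < mx < r) by lra.
      set (pr := exist (fun l => derivable_pt_lim (ff r) mx l) _ (ff_deriv r mx ltac:(lra))
                 : derivable_pt (ff r) mx).
      pose proof (deriv_minimum (ff r) a r mx pr ltac:(lra) ltac:(lra)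
                    (fun x h1 h2 => Hmin x (conj (Rlt_le _ _ h1) (Rlt_le _ _ h2)))) as HD.
      unfold pr, derive_pt in HD. simpl in HD.
      apply Rmult_integral in HD. destruct HD as [HD|HD]; [lra|].
      apply crit; lra.
Qed.

Lemma exp_le x y : x <= y -> exp x <= exp y.
Proof. intros H. destruct (Rle_lt_or_eq _ _ H) as [Hlt|Heq]. left; apply exp_increasing; auto. rewrite Heq; lra. Qed.

Lemma mgf_bound q s L : 0 < q < 1 -> 0 < L -> L <= - ln q ->
  q * exp (s * (1 - q)) + (1 - q) * exp (- (s * q)) <= exp (s^2 / (4 * L)).
Proof.
  intros Hq HL HLq.
  pose proof (exp_pos s) as Hes.
  set (Z := 1 - q + q * exp s).
  assert (HZ : 0 < Z) by (unfold Z; nra).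
  assert (HZd : Z = 1 - q + q * exp s) by reflexivity.
  clearbody Z.
  set (r := q * exp s / Z).
  assert (Hr0 : 0 < r) by (unfold r; apply Rdiv_lt_0_compat; nra).
  assert (H1r : 1 - r = (1 - q) / Z) by (unfold r; field_simplify_eq; lra).
  assert (Hr1 : r < 1).
  { assert (0 < (1 - q) / Z) by (apply Rdiv_lt_0_compat; lra). lra. }
  pose proof (ff_nonneg r q (conj Hr0 Hr1) Hq) as Hff.
  assert (Hlr : ln r = ln q + s - ln Z).
  { unfold r, Rdiv. rewrite ln_mult, ln_mult, ln_exp, ln_Rinv; try lra; try nra;
    try (apply Rinv_0_lt_compat; lra). }
  assert (Hl1r : ln (1 - r) = ln (1 - q) - ln Z).
  { rewrite H1r. unfold Rdiv. rewrite ln_mult, ln_Rinv; try lra; try (apply Rinv_0_lt_compat; lra). }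
  assert (E : ff r q = r * s - ln Z + (r - q)^2 * ln q).
  { unfold ff. rewrite Hlr, Hl1r. ring. }
  assert (Hsq : (r - q)^2 * ln q <= - L * (r - q)^2).
  { pose proof (pow2_ge_0 (r - q)). nra. }
  assert (Hamgm : s * (r - q) - L * (r - q)^2 <= s^2 / (4 * L)).
  { assert (s^2 / (4 * L) - (s * (r - q) - L * (r - q)^2) = (s - 2 * L * (r - q))^2 / (4 * L))
      by (field; lra).
    assert (0 <= (s - 2 * L * (r - q))^2 / (4 * L)).
    { apply Rdiv_le_0_compat; [apply pow2_ge_0|lra]. }
    lra. }
  assert (Hlog : ln Z - s * q <= s^2 / (4 * L)) by lra.
  assert (Eq : q * exp (s * (1 - q)) + (1 - q) * exp (- (s * q)) = exp (ln Z - s * q)).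
  { replace (ln Z - s * q) with (ln Z + - (s * q)) by ring. rewrite exp_plus, exp_ln by lra.
    replace (s * (1 - q)) with (s + - (s * q)) by ring. rewrite exp_plus.
    rewrite HZd. ring. }
  rewrite Eq. apply exp_le. exact Hlog.
Qed.

Lemma pow_exp_le x y (m : nat) : 0 <= x -> x <= exp y -> x ^ m <= exp (INR m * y).
Proof.
  intros H0 H1. induction m as [|m IH].
  - simpl. rewrite Rmult_0_l, exp_0. lra.
  - rewrite S_INR. replace ((INR m + 1) * y) with (y + INR m * y) by ring.
    rewrite exp_plus. simpl. apply Rmult_le_compat; auto. apply pow_le; auto.
Qed.

Theorem mainTheorem7 (n : nat) (p t : R) (gamma : nat -> R)
  (Hn : (1 <= n)%nat)
  (Hp0 : 0 <= p) (Hp1 : p <= 1)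
  (Ht : 0 <= t)
  (Hg0 : forall i : nat, (1 <= i)%nat -> 0 <= gamma i)
  (Hg1 : forall i : nat, (1 <= i)%nat -> gamma i <= 1)
  (Hgmono : forall i j : nat, (1 <= i)%nat -> (i <= j)%nat -> gamma j <= gamma i) :
  let pn := p_seq gamma p n in
  let qn := q_seq gamma p n in
  qn * exp (t * pn * (1 - qn)) + (1 - qn) * exp (- (t * pn * qn))
    <= exp (pn * t ^ 2 / (4 * INR n))
  /\
  qn * exp (t * pn * (qn - 1)) + (1 - qn) * exp (t * pn * qn)
    <= exp (pn * t ^ 2 / (4 * INR n)).
Proof.
  intros pn qn.
  assert (HnR : 0 < INR n) by (apply lt_0_INR; lia).
  assert (HP0 : 0 <= pn) by (unfold pn, p_seq; apply Rmult_le_pos; auto).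
  assert (HP1 : pn <= 1).
  { unfold pn, p_seq. pose proof (Hg1 n Hn). pose proof (Hg0 n Hn). nra. }
  assert (Hpi : forall i, (1 <= i <= n)%nat -> 0 <= 1 - p_seq gamma p i <= 1 - pn).
  { intros i Hi. unfold pn, p_seq.
    pose proof (Hg1 i ltac:(lia)). pose proof (Hg0 i ltac:(lia)).
    pose proof (Hgmono i n ltac:(lia) ltac:(lia)). split; nra. }
  assert (Hprod : forall m, (m <= n)%nat ->
            0 <= prod_1_to (fun i => 1 - p_seq gamma p i) m <= (1 - pn) ^ m).
  { induction m as [|m IH]; intros Hm.
    - simpl. lra.
    - simpl. destruct (IH ltac:(lia)) as [A B]. destruct (Hpi (S m) ltac:(lia)) as [C D].
      split. apply Rmult_le_pos; auto.
      rewrite Rmult_comm. apply Rmult_le_compat; auto. }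
  destruct (Hprod n (le_n n)) as [Hq0 Hqn]. fold (q_seq gamma p n) in Hq0, Hqn. fold qn in Hq0, Hqn.
  assert (Hexp : (1 - pn) ^ n <= exp (INR n * - pn)).
  { apply pow_exp_le; [lra|]. pose proof (exp_ineq1_le (- pn)). lra. }
  assert (Hrhs : 0 <= pn * t ^ 2 / (4 * INR n)).
  { apply Rdiv_le_0_compat; [apply Rmult_le_pos; [lra|apply pow2_ge_0]|lra]. }
  assert (Hrhs1 : 1 <= exp (pn * t ^ 2 / (4 * INR n))).
  { pose proof (exp_ineq1_le (pn * t ^ 2 / (4 * INR n))). lra. }
  destruct (Req_dec pn 0) as [HP|HP].
  { rewrite HP in Hrhs1 |- *. replace (t*0*(1-qn)) with 0 by ring. replace (-(t*0*qn)) with 0 by ring.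
    replace (t*0*(qn-1)) with 0 by ring. replace (t*0*qn) with 0 by ring. rewrite exp_0.
    split; lra. }
  assert (HPpos : 0 < pn) by lra.
  destruct (Req_dec qn 0) as [HQ|HQ].
  { rewrite HQ. replace (- (t * pn * 0)) with 0 by ring.
    replace (t * pn * 0) with 0 by ring. rewrite exp_0. split; lra. }
  assert (Hqpos : 0 < qn) by lra.
  assert (Hq1 : qn < 1).
  { apply Rle_lt_trans with ((1 - pn) ^ n); auto.
    replace n with (S (n - 1)) by lia. simpl.
    assert (0 <= (1 - pn) ^ (n - 1)) by (apply pow_le; lra).
    assert ((1 - pn) ^ (n - 1) <= 1) by (apply Rle_trans with (1 ^ (n - 1)); [apply pow_incr; split; lra | rewrite pow1; lra]).
    apply Rle_lt_trans with ((1 - pn) * 1); [apply Rmult_le_compat_l; lra | lra]. }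
  set (L := INR n * pn).
  assert (HL : 0 < L) by (unfold L; nra).
  assert (HLq : L <= - ln qn).
  { assert (qn <= exp (- L)) by (unfold L; replace (- (INR n * pn)) with (INR n * - pn) by ring; lra).
    destruct (Rle_lt_or_eq _ _ H) as [Hlt|Heq].
    - pose proof (ln_increasing _ _ Hqpos Hlt). rewrite ln_exp in H0. lra.
    - rewrite Heq, ln_exp. lra. }
  assert (Erhs : forall s, s ^ 2 = (t * pn) ^ 2 -> s ^ 2 / (4 * L) = pn * t ^ 2 / (4 * INR n)).
  { intros s Hs. rewrite Hs. unfold L. field. lra. }
  split.
  - rewrite <- (Erhs (t * pn)) by reflexivity.
    apply mgf_bound; auto; lra.
  - rewrite <- (Erhs (- (t * pn))) by ring.
    replace (t * pn * (qn - 1)) with (- (t * pn) * (1 - qn)) by ring.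
    replace (t * pn * qn) with (- (- (t * pn) * qn)) by ring.
    apply mgf_bound; auto; lra.
Qed.
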